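(* Let $\beta$ be a positive integer and $c_0>0$. There exist $\lambda=\lambda_{\beta,c_0}\in(0,\frac12)$ and $n_0$ such that for all $n\ge n_0$ and all $p$ with $(1+c_0)\frac{\log n}{n}\le p\le\frac12$, if $A$ is an $n\times n$ random matrix with i.i.d. Bernoulli$(p)$ entries then $$\mathbb{P}\{|\mathscr L_A(\lambda pn)|\ge\beta+1\}\le\big((1-p)^n n\big)^{\beta+3/4}.$$
   Context: For real $k\ge0$, $\mathscr L_A(k)$ is the set of column indices $j$ such that the $j$-th column of $A$ has at most $k$ nonzero entries. Bernoulli$(p)$ entries equal $1$ w.p. $p$ and $0$ otherwise. *)

(* Defs.v *)
From HB Require Import structures.
From mathcomp Require Import all_boot all_order all_algebra.
From mathcomp Require Import all_classical all_reals all_analysis.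
From mathcomp Require Import Rstruct Rstruct_topology.
From Stdlib Require Rdefinitions.
Notation R := Rdefinitions.R.
Set Implicit Arguments. Unset Strict Implicit. Unset Printing Implicit Defensive.
Import Order.TTheory GRing.Theory Num.Theory.
Local Open Scope ring_scope.

(* L_A(k): column indices j such that column j of A has at most k nonzero
   entries (entries are 0/1, encoded as bool; true = 1). *)
Definition Lset (n : nat) (A : 'M[bool]_n) (k : R) : {set 'I_n} :=
  [set j : 'I_n | (#|[set i : 'I_n | A i j]|%:R <= k)%R].

(* Probability that an n x n matrix with i.i.d. Bernoulli(p) entries
   satisfies the (decidable) event E: exact finite sum over all 0/1 matrices. *)
Definition bern_prob (n : nat) (p : R) (E : pred 'M[bool]_n) : R :=
  \sum_(A : 'M[bool]_n | E A)
     \prod_(i < n) \prod_(j < n) (if A i j then p else 1 - p).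

(* Main.v *)
Require Import Defs.
From HB Require Import structures.
From mathcomp Require Import all_boot all_order all_algebra.
From mathcomp Require Import all_classical all_reals all_analysis.
From mathcomp Require Import Rstruct Rstruct_topology.
Import Order.TTheory GRing.Theory Num.Theory.
Local Open Scope ring_scope.
From mathcomp Require Import ring lra.

Lemma sum_mx_prod n (F : 'I_n -> 'I_n -> bool -> R) :
  \sum_(A : 'M[bool]_n) \prod_i \prod_j F i j (A i j) =
  \prod_i \prod_j (F i j true + F i j false).
Proof.
rewrite pair_bigA /=.
rewrite (eq_bigr (fun x => \sum_(b : bool) F x.1 x.2 b)); last first.
  by move=> x _; rewrite big_bool.
rewrite (bigA_distr_bigA (fun x b => F x.1 x.2 b)) /=.
rewrite (reindex (fun f : {ffun 'I_n * 'I_n -> bool} => \matrix_(i, j) f (i, j))) /=.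
  apply: eq_bigr => f _; rewrite pair_bigA /=; apply: eq_bigr => -[i j] _.
  by rewrite mxE.
exists (fun A : 'M[bool]_n => [ffun x : 'I_n * 'I_n => A x.1 x.2]).
  by move=> f _; apply/ffunP => -[i j]; rewrite ffunE mxE.
by move=> A _; apply/matrixP => i j; rewrite mxE ffunE.
Qed.

Lemma prodr_ge1 (I : finType) (P : pred I) (F : I -> R) :
  (forall i, P i -> 1 <= F i) -> 1 <= \prod_(i | P i) F i.
Proof.
move=> H; apply: (big_ind (fun x => 1 <= x)) => //.
by move=> x y hx hy; rewrite -[1]mulr1 ler_pM.
Qed.

Lemma ln_le_sub1 (z : R) : 0 < z -> ln z <= z - 1.
Proof.
move=> hz; have := expR_ge1Dx (ln z); rewrite lnK ?posrE //.
by move=> h; rewrite lerBrDl.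
Qed.

Lemma key_ge1 (t K : R) (X : nat) : 0 < t <= 1 -> X%:R <= K ->
  1 <= expR (- K * ln t) * t ^+ X.
Proof.
move=> /andP[t0 t1] hX.
have tX : t ^+ X = expR (X%:R * ln t).
  by rewrite -[in LHS](lnK (x := t ^+ X)) ?posrE ?exprn_gt0 // lnXn // mulr_natl.
rewrite tX -exp.expRD.
apply: le_trans (expR_ge1Dx _); rewrite lerDl.
rewrite -mulrDl; apply: mulr_le0; first by rewrite addrC subr_le0.
exact: ln_le0.
Qed.


Lemma prod_const_ord n (x : R) : \prod_(i < n) x = x ^+ n.
Proof. by rewrite prodr_const card_ord. Qed.

Lemma bern_bound n p (t K : R) (k : nat) : 0 <= p <= 1 -> 0 < t <= 1 ->
  bern_prob p (fun A : 'M[bool]_n => (k <= #|Lset A K|)%N) <=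
  'C(n,k)%:R * ((expR (- K * ln t)) ^+ k * ((1 - p + p * t) ^+ k) ^+ n).
Proof.
move=> /andP[p0 p1] ht.
set c := expR (- K * ln t).
have c0 : 0 < c by exact: expR_gt0.
have t0 : 0 <= t by case/andP: ht => /ltW.
pose w (A : 'M[bool]_n) := \prod_i \prod_j (if A i j then p else 1 - p).
have w0 A : 0 <= w A.
  by apply: prodr_ge0 => i _; apply: prodr_ge0 => j _; case: (A i j); rewrite ?subr_ge0.
pose G (A : 'M[bool]_n) := \sum_(S : {set 'I_n} | #|S| == k)
   \prod_(j in S) (c * t ^+ #|[set i | A i j]|).
have T0 (A : 'M[bool]_n) (S : {set 'I_n}) : 0 <= \prod_(j in S) (c * t ^+ #|[set i | A i j]|).
  by apply: prodr_ge0 => j _; apply: mulr_ge0; [exact: ltW | exact: exprn_ge0].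
have G0 A : 0 <= G A by apply: sumr_ge0 => S _.
have step1 : bern_prob p (fun A : 'M[bool]_n => (k <= #|Lset A K|)%N) <= \sum_(A : 'M[bool]_n) w A * G A.
  rewrite /bern_prob big_mkcond /=; apply: ler_sum => A _.
  case: ifP => hE; last exact: mulr_ge0.
  apply: le_trans (_ : w A * 1 <= _); first by rewrite mulr1.
  apply: ler_wpM2l => //.
  set L := Lset A K.
  have cpos : (0 < #|[set S : {set 'I_n} | S \subset L & #|S| == k]|)%N.
    by rewrite cards_draws bin_gt0.
  apply: le_trans (_ : #|[set S : {set 'I_n} | S \subset L & #|S| == k]|%:R <= _).
    by rewrite ler1n.
  rewrite /G (bigID (fun S : {set 'I_n} => S \subset L)) /=.
  rewrite -[X in X <= _]addr0; apply: lerD; last by apply: sumr_ge0.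
  have -> : (#|[set S : {set 'I_n} | S \subset L & #|S| == k]|%:R : R) =
     \sum_(S in [set S : {set 'I_n} | S \subset L & #|S| == k]) 1.
    by rewrite sumr_const.
  rewrite big_mkcond [X in _ <= X]big_mkcond /=; apply: ler_sum => S _.
  rewrite inE andbC; case: ifP => // /andP[_ hSL].
  apply: prodr_ge1 => j hj.
  have := (fintype.subsetP hSL) j hj; rewrite /L /Lset inE => hjL.
  exact: key_ge1.
apply: le_trans step1 _.
rewrite (eq_bigr (fun A => \sum_(S : {set 'I_n} | #|S| == k)
   w A * \prod_(j in S) (c * t ^+ #|[set i | A i j]|))); last first.
  by move=> A _; rewrite mulr_sumr.
rewrite exchange_big /=.
set Y := 1 - p + p * t.
rewrite (eq_bigr (fun _ => c ^+ k * (Y ^+ k) ^+ n)); last first.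
  move=> S /eqP hS.
  pose tt j := if j \in S then t else 1.
  have e A : w A * \prod_(j in S) (c * t ^+ #|[set i | A i j]|) =
      c ^+ k * \prod_i \prod_j (if A i j then p * tt j else 1 - p).
    rewrite big_split /= prodr_const hS mulrCA; congr (_ * _).
    rewrite big_mkcond /=.
    rewrite (eq_bigr (fun j => \prod_i (if j \in S then (if A i j then t else 1) else 1))); last first.
      move=> j _; case: ifP => hj; last by rewrite big1.
      rewrite -prodr_const big_mkcond; apply: eq_bigr => i _; by rewrite inE.
    rewrite [X in _ * X]exchange_big /= /w -big_split; apply: eq_bigr => i _.
    rewrite -big_split; apply: eq_bigr => j _; rewrite /tt.
    by case: (A i j); case: (j \in S) => /=; rewrite ?mulr1.
  rewrite (eq_bigr _ (fun A _ => e A)) -mulr_sumr (@sum_mx_prod n (fun i j b => if b then p * tt j else 1 - p)) /=.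
  have inner : \prod_j (p * tt j + (1 - p)) = Y ^+ k.
    rewrite -hS -prodr_const [RHS]big_mkcond /=; apply: eq_bigr => j _; rewrite /tt.
    case: ifP => _; first by rewrite /Y addrC.
    by rewrite mulr1 addrC subrK.
  by rewrite (eq_bigr _ (fun i _ => inner)) prod_const_ord.
have -> : \sum_(S : {set 'I_n} | #|S| == k) c ^+ k * (Y ^+ k) ^+ n =
   \sum_(S in [set S : {set 'I_n} | #|S| == k]) c ^+ k * (Y ^+ k) ^+ n.
  by apply: eq_bigl => S; rewrite inE.
by rewrite sumr_const card_draws card_ord mulr_natl.
Qed.
Lemma bin_le_pow n k : ('C(n,k) <= n ^ k)%N.
Proof.
apply: leq_trans (_ : 'C(n,k) * k`! <= _)%N; first by rewrite leq_pmulr ?fact_gt0.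
rewrite bin_ffact ffact_prod.
apply: leq_trans (_ : \prod_(i < k) n <= _)%N.
  by apply: leq_prod => i _; exact: leq_subr.
by rewrite prod_nat_const card_ord.
Qed.

Theorem proposition4p6 (beta : nat) (c0 : R) :
  (0 < beta)%N -> 0 < c0 ->
  exists lambda : R, 0 < lambda < 1 / 2 /\
  exists n0 : nat, forall n : nat, (n0 <= n)%N ->
  forall p : R,
    (1 + c0) * ln (n%:R : R) / n%:R <= p <= 1 / 2 ->
    bern_prob p (fun A : 'M[bool]_n =>
                   (beta.+1 <= #|Lset A (lambda * p * n%:R)%R|)%N)
      <= ((1 - p) ^+ n * n%:R) `^ (beta%:R + 3 / 4).
Proof.
move=> hb hc0.
set a := c0 / (1 + c0).
set B : R := (beta.+1)%:R.
set eps := a / (4 * B).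
set t := eps / 4.
have c1 : 0 < 1 + c0 by lra.
have ha : a * (1 + c0) = c0 by rewrite /a mulfVK // gt_eqF.
have a0 : 0 < a by rewrite /a divr_gt0.
have a1 : a < 1 by nra.
have B2 : 2 <= B by rewrite /B ler_nat ltnS.
have he : eps * (4 * B) = a by rewrite /eps mulfVK // gt_eqF //; lra.
have e0 : 0 < eps by nra.
have e1 : eps < 1 / 8 by nra.
have t0 : 0 < t by rewrite /t; lra.
have t1 : t <= 1 by rewrite /t; lra.
exists (eps * t / 2); split.
  apply/andP; split; rewrite /t; nra.
exists 1%N => n hn p /andP[hp1 hp2].
set N : R := n%:R.
have N1 : 1 <= N by rewrite /N ler1n.
have N0 : 0 < N by lra.
have Ln0 : 0 <= ln N by exact: ln_ge0.
have F3 : (1 + c0) * ln N <= p * N.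
  by rewrite -ler_pdivrMr.
have p0 : 0 <= p by nra.
have q1 : 0 < 1 - p by lra.
set K := eps * t / 2 * p * N.
apply: le_trans (@bern_bound n p t K beta.+1 _ _) _.
- by apply/andP; split; lra.
- by apply/andP; split.
set c := expR (- K * ln t).
set Y := 1 - p + p * t.
have Y0 : 0 < Y by rewrite /Y; nra.
have c0' : 0 < c by exact: expR_gt0.
set X := N * c * Y ^+ n.
have X0 : 0 < X by rewrite /X !mulr_gt0 // exprn_gt0.
apply: le_trans (_ : X ^+ beta.+1 <= _).
  rewrite /X !exprMn -exprM mulnC exprM -natrX mulrA.
  apply: ler_wpM2r; first by rewrite exprn_ge0 // exprn_ge0 // ltW.
  apply: ler_wpM2r; first by rewrite exprn_ge0 // ltW.
  by rewrite ler_nat bin_le_pow.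
set q := (1 - p) ^+ n * N.
have q0 : 0 < q by rewrite /q mulr_gt0 // exprn_gt0.
have -> : q `^ (beta%:R + 3 / 4) = expR ((B - 1/4) * ln q).
  rewrite /powR ifF; last by rewrite gt_eqF.
  by congr (expR (_ * _)); rewrite /B -natr1; lra.
have -> : X ^+ beta.+1 = expR (B * ln X).
  by rewrite -[LHS]lnK ?posrE ?exprn_gt0 // lnXn // mulr_natl.
rewrite ler_expR.
have lnX : ln X = ln N + (- K * ln t) + N * ln Y.
  rewrite /X lnM ?posrE ?mulr_gt0 ?exprn_gt0 // lnM ?posrE // expRK lnXn //.
  by rewrite mulr_natl.
have lnq : ln q = N * ln (1 - p) + ln N.
  by rewrite /q lnM ?posrE ?exprn_gt0 // lnXn // mulr_natl.
have F2 : ln (1 - p) <= - p by have := ln_le_sub1 _ q1; lra.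
have F1 : ln Y <= ln (1 - p) + 2 * p * t.
  have hz : 0 < Y / (1 - p) by rewrite divr_gt0.
  have := ln_le_sub1 _ hz.
  have -> : ln (Y / (1 - p)) = ln Y - ln (1 - p).
    by rewrite lnM ?posrE ?invr_gt0 // lnV ?posrE.
  have -> : Y / (1 - p) - 1 = p * t / (1 - p).
    by rewrite /Y; field; rewrite gt_eqF.
  have : p * t / (1 - p) <= 2 * p * t.
    rewrite ler_pdivrMr //.
    have : 0 <= p * t by rewrite mulr_ge0 // ltW.
    nra.
  lra.
have F4 : - ln t <= t^-1.
  have ti : 0 < t^-1 by rewrite invr_gt0.
  have := ln_le_sub1 _ ti; rewrite lnV ?posrE //; lra.
have hK : K * t^-1 = eps * p * N / 2.
  by rewrite /K; field; rewrite gt_eqF.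
have K0 : 0 <= K.
  have hh1 : 0 <= eps * t by nra.
  have hh2 : 0 <= eps * t / 2 * p by nra.
  rewrite /K; nra.
have h2 : - K * ln t <= eps * p * N / 2.
  rewrite -hK mulNr -mulrN; exact: ler_wpM2l.
have h1 : N * ln Y <= N * ln (1 - p) + 2 * t * (p * N).
  have := ler_wpM2l (ltW N0) F1; nra.
have hlX : ln X <= ln q + eps * (p * N).
  rewrite lnX lnq; rewrite /t in h1; lra.
have h3 : N * ln (1 - p) <= - (p * N).
  have := ler_wpM2l (ltW N0) F2; nra.
have hq : ln q <= - (a * (p * N)).
  have : ln N <= p * N / (1 + c0) by rewrite ler_pdivlMr // mulrC.
  have -> : p * N / (1 + c0) = (1 - a) * (p * N).
    by rewrite /a; field; rewrite gt_eqF.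
  rewrite lnq; nra.
have hBe : B * eps = a / 4 by lra.
have hB0 : 0 <= B by lra.
have : B * ln X <= B * (ln q + eps * (p * N)) by apply: ler_wpM2l.
rewrite mulrDr mulrA hBe mulrBl => h.
have : a / 4 * (p * N) = (a * (p * N)) / 4 by rewrite mulrAC.
lra.
Qed.
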